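(* Let $\alpha,\beta,\gamma\in\mathbb{H}$ be three distinct pairwise equivalent quaternions. Then for every integer $k\ge0$, $$\gamma^k=(\gamma-\beta)(\alpha-\beta)^{-1}\alpha^k+(\alpha-\gamma)(\alpha-\beta)^{-1}\beta^k.$$
   Context: $\mathbb{H}$ denotes the real quaternions. Two quaternions $\alpha,\beta$ are equivalent if $\alpha=q^{-1}\beta q$ for some nonzero $q\in\mathbb{H}$; equivalently, $\mathrm{Re}(\alpha)=\mathrm{Re}(\beta)$ and $|\alpha|=|\beta|$. *)

(* Defs.v *)
From Stdlib Require Import Reals.
Open Scope R_scope.

Record quat : Type := Quat { qr : R; qi : R; qj : R; qk : R }.

Definition qzero : quat := Quat 0 0 0 0.
Definition qone : quat := Quat 1 0 0 0.

Definition qadd (p q : quat) : quat :=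
  Quat (qr p + qr q) (qi p + qi q) (qj p + qj q) (qk p + qk q).

Definition qopp (p : quat) : quat := Quat (- qr p) (- qi p) (- qj p) (- qk p).

Definition qsub (p q : quat) : quat := qadd p (qopp q).

(* Hamilton product: i^2 = j^2 = k^2 = ijk = -1 *)
Definition qmul (p q : quat) : quat :=
  Quat (qr p * qr q - qi p * qi q - qj p * qj q - qk p * qk q)
       (qr p * qi q + qi p * qr q + qj p * qk q - qk p * qj q)
       (qr p * qj q - qi p * qk q + qj p * qr q + qk p * qi q)
       (qr p * qk q + qi p * qj q - qj p * qi q + qk p * qr q).

Definition qnorm2 (q : quat) : R :=
  qr q * qr q + qi q * qi q + qj q * qj q + qk q * qk q.

Definition qconj (q : quat) : quat := Quat (qr q) (- qi q) (- qj q) (- qk q).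

Definition qinv (q : quat) : quat :=
  let n := qnorm2 q in
  Quat (qr q / n) (- qi q / n) (- qj q / n) (- qk q / n).

Fixpoint qpow (q : quat) (k : nat) : quat :=
  match k with
  | O => qone
  | S k' => qmul q (qpow q k')
  end.

Definition qequiv (a b : quat) : Prop :=
  exists q : quat, q <> qzero /\ a = qmul (qmul (qinv q) b) q.

(* Main.v *)
Require Import Defs.
From Stdlib Require Import Reals Lra Psatz.
Open Scope R_scope.

Definition F (a N : R) (y1 y0 : quat) : quat :=
  Quat (2*a*qr y1 - N*qr y0) (2*a*qi y1 - N*qi y0)
       (2*a*qj y1 - N*qj y0) (2*a*qk y1 - N*qk y0).

Lemma qmul_assoc x y z : qmul x (qmul y z) = qmul (qmul x y) z.
Proof. destruct x, y, z; unfold qmul; simpl; f_equal; ring. Qed.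

Lemma rec_step x y : qmul x (qmul x y) = F (qr x) (qnorm2 x) (qmul x y) y.
Proof. destruct x, y; unfold F, qmul, qnorm2; simpl; f_equal; ring. Qed.

Lemma norm_nz q : q <> qzero -> qnorm2 q <> 0.
Proof.
  destruct q as [a b c d]; unfold qnorm2, qzero; simpl; intros H E.
  apply H. assert (a = 0) by nra. assert (b = 0) by nra.
  assert (c = 0) by nra. assert (d = 0) by nra. subst; reflexivity.
Qed.

Lemma equiv_inv a b : qequiv a b -> qr a = qr b /\ qnorm2 a = qnorm2 b.
Proof.
  intros [q [Hq ->]]. pose proof (norm_nz q Hq) as Hn.
  destruct q as [q0 q1 q2 q3], b as [b0 b1 b2 b3].
  unfold qnorm2 in *; unfold qmul, qinv, qnorm2; simpl in *.
  split; field; exact Hn.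
Qed.

Lemma F_lin a N c1 c2 y1 y0 z1 z0 :
  F a N (qadd (qmul c1 y1) (qmul c2 z1)) (qadd (qmul c1 y0) (qmul c2 z0)) =
  qadd (qmul c1 (F a N y1 y0)) (qmul c2 (F a N z1 z0)).
Proof. destruct c1, c2, y1, y0, z1, z0; unfold F, qadd, qmul; simpl; f_equal; ring. Qed.

Lemma sub_nz a b : a <> b -> qsub a b <> qzero.
Proof.
  intros H E; apply H. destruct a, b; unfold qsub, qadd, qopp, qzero in *; simpl in *.
  injection E; intros; f_equal; lra.
Qed.

Theorem mainTheorem4 (alpha beta gamma : quat)
  (Hab : alpha <> beta) (Hbc : beta <> gamma) (Hac : alpha <> gamma)
  (Eab : qequiv alpha beta) (Ebc : qequiv beta gamma) (Eac : qequiv alpha gamma) :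
  forall k : nat,
    qpow gamma k =
    qadd (qmul (qmul (qsub gamma beta) (qinv (qsub alpha beta))) (qpow alpha k))
         (qmul (qmul (qsub alpha gamma) (qinv (qsub alpha beta))) (qpow beta k)).
Proof.
  destruct (equiv_inv _ _ Eab) as [R1 N1].
  destruct (equiv_inv _ _ Ebc) as [R2 N2].
  pose proof (norm_nz _ (sub_nz _ _ Hab)) as Hn.
  set (c1 := qmul (qsub gamma beta) (qinv (qsub alpha beta))).
  set (c2 := qmul (qsub alpha gamma) (qinv (qsub alpha beta))).
  assert (H : forall k, qpow gamma k = qadd (qmul c1 (qpow alpha k)) (qmul c2 (qpow beta k))
              /\ qpow gamma (S k) = qadd (qmul c1 (qpow alpha (S k))) (qmul c2 (qpow beta (S k)))).
  { induction k as [|k [IH0 IH1]].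
    - subst c1 c2; simpl.
      destruct alpha as [a0 a1 a2 a3], beta as [b0 b1 b2 b3], gamma as [g0 g1 g2 g3].
      unfold qnorm2, qsub, qadd, qopp in Hn; simpl in Hn.
      unfold qmul, qadd, qsub, qopp, qinv, qnorm2, qone; simpl.
      split; f_equal; field; exact Hn.
    - split; [exact IH1|].
      change (qpow gamma (S (S k))) with (qmul gamma (qmul gamma (qpow gamma k))).
      change (qpow alpha (S (S k))) with (qmul alpha (qmul alpha (qpow alpha k))).
      change (qpow beta (S (S k))) with (qmul beta (qmul beta (qpow beta k))).
      rewrite !rec_step.
      change (qmul gamma (qpow gamma k)) with (qpow gamma (S k)).
      change (qmul alpha (qpow alpha k)) with (qpow alpha (S k)).
      change (qmul beta (qpow beta k)) with (qpow beta (S k)).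
      rewrite <- R1, <- N1, <- R2, <- N2, <- R1, <- N1.
      rewrite IH0, IH1. apply F_lin. }
  intro k; exact (proj1 (H k)).
Qed.
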